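(* Let $N\ge1$ and let $f_0,\alpha,f_2,\dots,f_N$ be differentiable functions of $z$ with $\alpha(z)\in(-1,1)$; set $f_1\equiv0$ and $\hat I(z,\mu)=\sum_{i=0}^N f_i(z)\Phi_i(\mu)$, where $\Phi_i$ is taken with parameter $\alpha(z)$. Then $$\partial_z\hat I-\tilde{\mathcal P}\,\partial_z\hat I=\big(\alpha\,\partial_zf_N-4f_N\,\partial_z\alpha\big)\tilde\Phi_{N+1},$$ and consequently, for $k=0,\dots,N$, $$\int_{-1}^1\mu^{k+1}\big(\partial_z\hat I-\tilde{\mathcal P}\partial_z\hat I\big)\,d\mu=\begin{cases}0,&k<N,\\ \tilde K_{N+1,N+1}\big(\alpha\,\partial_zf_N-4f_N\,\partial_z\alpha\big),&k=N.\end{cases}$$ In particular, for $N=1$ all these quantities vanish.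
   Context: For a parameter $\alpha\in(-1,1)$ define on $[-1,1]$ the weights $\omega(\mu)=(1+\alpha\mu)^{-4}$ and $\tilde\omega(\mu)=(1+\alpha\mu)^{-5}$. Let $\{\phi_k\}_{k\ge0}$ (resp. $\{\tilde\phi_k\}_{k\ge0}$) be the monic orthogonal polynomials on $[-1,1]$ with respect to $\omega$ (resp. $\tilde\omega$); their coefficients depend smoothly on $\alpha$. Set $\Phi_k=\omega\phi_k$, $\tilde\Phi_k=\tilde\omega\tilde\phi_k$, $\tilde K_{j,k}=\int_{-1}^1\mu^j\tilde\phi_k\,\tilde\omega\,d\mu$. The operator $\tilde{\mathcal P}$ (at parameter $\alpha$) is the orthogonal projection onto $\mathrm{span}\{\tilde\Phi_0,\dots,\tilde\Phi_N\}$ with respect to the inner product $\langle\Phi,\Psi\rangle=\int_{-1}^1\Phi\Psi/\tilde\omega\,d\mu$, i.e. $\tilde{\mathcal P}g=\sum_{i=0}^N\frac{\int_{-1}^1 g\,\tilde\phi_i\,d\mu}{\tilde K_{i,i}}\tilde\Phi_i$. *)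

(* Defs.v *)
From Stdlib Require Import Reals ClassicalEpsilon.
Open Scope R_scope.

(* Total Riemann integral on [a,b]: the value of RiemannInt when f is
   Riemann-integrable (unspecified otherwise; all integrands used below are
   continuous on [-1,1]). *)
Definition Rint (f : R -> R) (a b : R) : R :=
  epsilon (inhabits 0%R)
    (fun v => exists pr : Riemann_integrable f a b, RiemannInt pr = v).

Fixpoint sumR (n : nat) (g : nat -> R) : R :=
  match n with
  | O => 0
  | S m => sumR m g + g m
  end.

Definition omega  (a mu : R) : R := / (1 + a * mu) ^ 4.
Definition omegat (a mu : R) : R := / (1 + a * mu) ^ 5.

Definition mpoly (c : nat -> nat -> R -> R) (k : nat) (a mu : R) : R :=
  mu ^ k + sumR k (fun j => c k j a * mu ^ j).

Definition is_MOP (w : R -> R -> R) (c : nat -> nat -> R -> R) : Prop :=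
  forall a, -1 < a < 1 -> forall k j : nat, (j < k)%nat ->
    Rint (fun mu => mu ^ j * mpoly c k a mu * w a mu) (-1) 1 = 0.

Definition Phi  (c : nat -> nat -> R -> R) (a : R) (k : nat) (mu : R) : R :=
  omega a mu * mpoly c k a mu.
Definition Phit (ct : nat -> nat -> R -> R) (a : R) (k : nat) (mu : R) : R :=
  omegat a mu * mpoly ct k a mu.

Definition Kt (ct : nat -> nat -> R -> R) (a : R) (j k : nat) : R :=
  Rint (fun mu => mu ^ j * mpoly ct k a mu * omegat a mu) (-1) 1.

Definition Ptilde (ct : nat -> nat -> R -> R) (N : nat) (a : R)
    (g : R -> R) (mu : R) : R :=
  sumR (S N) (fun i =>
    Rint (fun nu => g nu * mpoly ct i a nu) (-1) 1 / Kt ct a i i * Phit ct a i mu).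

Definition Ihat (c : nat -> nat -> R -> R) (N : nat) (f : nat -> R -> R)
    (alpha : R -> R) (z mu : R) : R :=
  sumR (S N) (fun i => f i z * Phi c (alpha z) i mu).

Definition is_dz_Ihat (c : nat -> nat -> R -> R) (N : nat) (f : nat -> R -> R)
    (alpha : R -> R) (dI : R -> R -> R) : Prop :=
  forall z mu, -1 <= mu <= 1 ->
    derivable_pt_lim (fun z' => Ihat c N f alpha z' mu) z (dI z mu).

(* Main.v *)
Require Import Defs.
From Stdlib Require Import Reals Lra Lia ClassicalEpsilon Classical FunctionalExtensionality.
From Coquelicot Require Import Coquelicot.
Open Scope R_scope.

Lemma sumR_ext n g h : (forall j, (j < n)%nat -> g j = h j) -> sumR n g = sumR n h.
Proof. induction n; intros H; simpl; auto. rewrite IHn by (intros; apply H; lia). rewrite H by lia. reflexivity. Qed.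

Lemma sumR_zero n : sumR n (fun _ => 0) = 0.
Proof. induction n; simpl; auto. rewrite IHn; ring. Qed.

Lemma sumR_plus n g h : sumR n (fun j => g j + h j) = sumR n g + sumR n h.
Proof. induction n; simpl; auto. ring. rewrite IHn; ring. Qed.

Lemma sumR_scal n c g : sumR n (fun j => c * g j) = c * sumR n g.
Proof. induction n; simpl; auto. ring. rewrite IHn; ring. Qed.

Lemma sumR_shift n g : sumR (S n) g = g O + sumR n (fun j => g (S j)).
Proof. induction n; simpl in *. ring. rewrite IHn. ring. Qed.

Definition polylt (n : nat) (p : R -> R) :=
  exists b : nat -> R, forall x, p x = sumR n (fun j => b j * x ^ j).

Lemma polylt_ext n p q : (forall x, p x = q x) -> polylt n p -> polylt n q.
Proof. intros E [b Hb]; exists b; intros; rewrite <- E; auto. Qed.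

Lemma polylt_0 n : polylt n (fun _ => 0).
Proof. exists (fun _ => 0); intros; rewrite (sumR_ext _ _ (fun _ => 0)); [rewrite sumR_zero; auto| intros; ring]. Qed.

Lemma polylt_plus n p q : polylt n p -> polylt n q -> polylt n (fun x => p x + q x).
Proof. intros [b Hb] [d Hd]; exists (fun j => b j + d j); intros x.
rewrite Hb, Hd, <- sumR_plus; apply sumR_ext; intros; ring. Qed.

Lemma polylt_scal n c p : polylt n p -> polylt n (fun x => c * p x).
Proof. intros [b Hb]; exists (fun j => c * b j); intros x.
rewrite Hb, <- sumR_scal; apply sumR_ext; intros; ring. Qed.

Lemma polylt_minus n p q : polylt n p -> polylt n q -> polylt n (fun x => p x - q x).
Proof. intros Hp Hq. apply (polylt_ext n (fun x => p x + (-1) * q x)).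
intros; ring. apply polylt_plus; auto. apply polylt_scal; auto. Qed.

Lemma polylt_S n p : polylt n p -> polylt (S n) p.
Proof. intros [b Hb]; exists (fun j => if Nat.ltb j n then b j else 0); intros x.
simpl. rewrite Nat.ltb_irrefl. rewrite Hb. rewrite Rmult_0_l, Rplus_0_r. apply sumR_ext.
intros j Hj. apply Nat.ltb_lt in Hj. rewrite Hj. auto. Qed.

Lemma polylt_le n m p : (n <= m)%nat -> polylt n p -> polylt m p.
Proof. induction 1; auto. intros; apply polylt_S; auto. Qed.

Lemma polylt_pow j : polylt (S j) (fun x => x ^ j).
Proof. exists (fun i => if Nat.eqb i j then 1 else 0); intros x. simpl.
rewrite Nat.eqb_refl. rewrite (sumR_ext _ _ (fun _ => 0)). rewrite sumR_zero; ring.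
intros i Hi. replace (Nat.eqb i j) with false. ring. symmetry; apply Nat.eqb_neq; lia. Qed.

Lemma polylt_mulx n p : polylt n p -> polylt (S n) (fun x => x * p x).
Proof. intros [b Hb]; exists (fun j => match j with O => 0 | S j' => b j' end); intros x.
rewrite sumR_shift. rewrite Hb, <- sumR_scal. simpl. rewrite Rmult_0_l, Rplus_0_l.
apply sumR_ext; intros; simpl; ring. Qed.

Lemma polylt_sum n m (g : nat -> R -> R) : (forall i, (i < m)%nat -> polylt n (g i)) ->
  polylt n (fun x => sumR m (fun i => g i x)).
Proof. induction m; intros H; simpl. apply polylt_0.
apply polylt_plus. apply IHm; intros; apply H; lia. apply H; lia. Qed.

Lemma polylt_coef n (b : nat -> R) : polylt n (fun x => sumR n (fun j => b j * x ^ j)).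
Proof. exists b; auto. Qed.

Lemma polylt_mpoly c k a : polylt (S k) (mpoly c k a).
Proof. unfold mpoly. apply polylt_plus. apply polylt_pow. apply polylt_S, polylt_coef. Qed.

Definition cont (p : R -> R) := forall x, continuity_pt p x.

Lemma cont_plus p q : cont p -> cont q -> cont (fun x => p x + q x).
Proof. intros Hp Hq x; apply (continuity_pt_plus p q); auto. Qed.
Lemma cont_mult p q : cont p -> cont q -> cont (fun x => p x * q x).
Proof. intros Hp Hq x; apply (continuity_pt_mult p q); auto. Qed.
Lemma cont_const c : cont (fun _ => c).
Proof. intros x; apply continuity_pt_const; intros u v; auto. Qed.
Lemma cont_pow j : cont (fun x => x ^ j).
Proof. intros x; apply derivable_continuous_pt. exists (INR j * x ^ Init.Nat.pred j). apply derivable_pt_lim_pow. Qed.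

Lemma cont_ext p q : (forall x, p x = q x) -> cont p -> cont q.
Proof. intros E H. assert (p = q) by (apply functional_extensionality; auto). subst; auto. Qed.

Lemma polylt_cont n p : polylt n p -> cont p.
Proof. intros [b Hb]. apply (cont_ext (fun x => sumR n (fun j => b j * x ^ j))). intros; auto.
clear Hb. induction n; simpl. apply cont_const. apply cont_plus; auto. apply cont_mult. apply cont_const. apply cont_pow. Qed.
Lemma pow_le1 x n : 0 <= x <= 1 -> x ^ n <= 1.
Proof. intros H; induction n; simpl. lra. assert (0 <= x ^ n) by (apply pow_le; lra). nra. Qed.

Lemma sum_bound n (c : nat -> R) x : Rabs x <= 1 ->
  Rabs (sumR n (fun j => c j * x ^ j)) <= sumR n (fun j => Rabs (c j)).
Proof. intros Hx; induction n; simpl. rewrite Rabs_R0; lra.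
eapply Rle_trans. apply Rabs_triang. apply Rplus_le_compat; auto.
rewrite Rabs_mult, <- RPow_abs. assert (Rabs x ^ n <= 1) by (apply pow_le1; split; [apply Rabs_pos|lra]).
assert (0 <= Rabs x ^ n) by (apply pow_le, Rabs_pos). pose proof (Rabs_pos (c n)). nra. Qed.

Lemma sumR_nonneg n g : (forall j, (j < n)%nat -> 0 <= g j) -> 0 <= sumR n g.
Proof. induction n; intros H; simpl. lra. assert (0 <= sumR n g) by (apply IHn; intros; apply H; lia). assert (0 <= g n) by (apply H; lia). lra. Qed.

Lemma coefzero n : forall (b : nat -> R), (forall x, 0 < x < 1 -> sumR n (fun j => b j * x ^ j) = 0) ->
  forall j, (j < n)%nat -> b j = 0.
Proof. induction n; intros b H j Hj. lia.
set (M := sumR n (fun j => Rabs (b (S j)))).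
assert (HM : 0 <= M) by (apply sumR_nonneg; intros; apply Rabs_pos).
assert (Hq : forall x, 0 < x < 1 -> b O + x * sumR n (fun j => b (S j) * x ^ j) = 0).
{ intros x Hx. rewrite <- (H x Hx), sumR_shift, <- sumR_scal. simpl. f_equal. ring. apply sumR_ext; intros; simpl; ring. }
assert (Hb0 : b O = 0).
{ destruct (Req_dec (b O) 0) as [|Hne]; auto. exfalso.
  assert (Hp : 0 < Rabs (b O)) by (apply Rabs_pos_lt; auto).
  set (x := Rmin (1/2) (Rabs (b O) / (2 * (M + 1)))).
  assert (Hx1 : 0 < x). { unfold x; apply Rmin_pos. lra. apply Rdiv_lt_0_compat; lra. }
  assert (Hx2 : x <= 1/2) by apply Rmin_l.
  assert (Hx3 : x <= Rabs (b O) / (2 * (M + 1))) by apply Rmin_r.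
  assert (Hx4 : x * (2 * (M + 1)) <= Rabs (b O)).
  { apply (Rmult_le_compat_r (2 * (M+1))) in Hx3; [|lra]. field_simplify in Hx3; lra. }
  assert (Hx5 : 0 < x < 1) by lra. specialize (Hq x Hx5).
  assert (Hbd := sum_bound n (fun j => b (S j)) x ltac:(rewrite Rabs_right; lra)).
  simpl in Hbd; fold M in Hbd. set (Q := sumR n (fun j => b (S j) * x ^ j)) in *.
  assert (b O = - (x * Q)) by lra.
  assert (E : Rabs (b O) = x * Rabs Q). { rewrite H0, Rabs_Ropp, Rabs_mult. rewrite (Rabs_right x) by lra. auto. }
  rewrite E in Hp, Hx4. assert (x * Rabs Q <= x * M) by (apply Rmult_le_compat_l; lra). assert (0 <= x * M) by (apply Rmult_le_pos; lra). lra. }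
destruct j as [|j]; auto.
apply (IHn (fun j => b (S j))); [|lia]. intros x Hx. specialize (Hq x Hx). rewrite Hb0 in Hq.
apply (Rmult_eq_reg_l x). lra. lra. Qed.

Lemma nonvanish n (b : nat -> R) : exists x, 0 < x < 1 /\ x ^ n + sumR n (fun j => b j * x ^ j) <> 0.
Proof. apply NNPP; intros Hn.
assert (H : forall x, 0 < x < 1 -> sumR (S n) (fun j => (if Nat.eqb j n then 1 else b j) * x ^ j) = 0).
{ intros x Hx. apply NNPP; intros Hne. apply Hn. exists x. split; auto. simpl in Hne. rewrite Nat.eqb_refl in Hne.
  rewrite (sumR_ext _ _ (fun j => b j * x ^ j)) in Hne. intro E; apply Hne; lra. intros j Hj. replace (Nat.eqb j n) with false; auto. symmetry; apply Nat.eqb_neq; lia. }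
pose proof (coefzero (S n) _ H n ltac:(lia)). cbv beta in H0. rewrite Nat.eqb_refl in H0. lra. Qed.
Ltac rr := match goal with |- @eq _ ?a ?b => change (@eq R a b) end.
Lemma Rint_RInt f a b : ex_RInt f a b -> Rint f a b = RInt f a b.
Proof. intros H. unfold Rint.
assert (Hex : exists v, exists pr : Riemann_integrable f a b, RiemannInt pr = v).
{ exists (RInt f a b). exists (ex_RInt_Reals_0 _ _ _ H). symmetry; apply RInt_Reals. }
destruct (epsilon_spec (inhabits 0) _ Hex) as [pr Hpr]. rewrite <- Hpr. symmetry; apply RInt_Reals. Qed.

Lemma pos1 a x : -1 < a < 1 -> -1 <= x <= 1 -> 0 < 1 + a * x.
Proof. intros Ha Hx. destruct (Rle_dec 0 a).
assert (0 <= a * (x + 1)) by (apply Rmult_le_pos; lra). nra.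
assert (0 <= (-a) * (1 - x)) by (apply Rmult_le_pos; lra). nra. Qed.

Lemma omegat_cont a x : -1 < a < 1 -> -1 <= x <= 1 -> continuous (omegat a) x.
Proof. intros Ha Hx. apply (@ex_derive_continuous R_AbsRing R_NormedModule). unfold omegat. assert (0 < 1 + a * x) by (apply pos1; auto).
auto_derive. intro E. assert (0 < (1 + a * x) ^ 5) by (apply pow_lt; lra). simpl in H0. lra. Qed.

Lemma cont_continuous p x : cont p -> continuous p x.
Proof. intros H. apply continuity_pt_filterlim, H. Qed.

Lemma ex_w a h : -1 < a < 1 -> cont h -> ex_RInt (fun x => h x * omegat a x) (-1) 1.
Proof. intros Ha Hh. apply (@ex_RInt_continuous R_CompleteNormedModule). intros z Hz. rewrite Rmin_left, Rmax_right in Hz by lra.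
apply (continuous_mult h (omegat a)). apply cont_continuous; auto. apply omegat_cont; auto. Qed.

Definition ip a p q := RInt (fun x => p x * q x * omegat a x) (-1) 1.

Lemma ex_ip a p q : -1 < a < 1 -> cont p -> cont q -> ex_RInt (fun x => p x * q x * omegat a x) (-1) 1.
Proof. intros. apply (ex_w a (fun x => p x * q x)); auto. apply cont_mult; auto. Qed.

Lemma ip_ext a p q r : (forall x, p x = q x) -> ip a p r = ip a q r.
Proof. intros E. unfold ip. apply (@RInt_ext R_CompleteNormedModule). intros; rr; rewrite E; auto. Qed.

Lemma ip_sym a p q : ip a p q = ip a q p.
Proof. unfold ip. apply (@RInt_ext R_CompleteNormedModule). intros; rr; ring. Qed.

Lemma ip_plus a p q r : -1 < a < 1 -> cont p -> cont q -> cont r ->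
  ip a (fun x => p x + q x) r = ip a p r + ip a q r.
Proof. intros Ha Hp Hq Hr. unfold ip.
rewrite (@RInt_ext R_CompleteNormedModule _ (fun x => plus (p x * r x * omegat a x) (q x * r x * omegat a x))).
rewrite (@RInt_plus R_CompleteNormedModule). reflexivity. apply ex_ip; auto. apply ex_ip; auto.
intros; rr; unfold plus; simpl; ring. Qed.

Lemma ip_scal a c p r : -1 < a < 1 -> cont p -> cont r ->
  ip a (fun x => c * p x) r = c * ip a p r.
Proof. intros Ha Hp Hr. unfold ip.
rewrite (@RInt_ext R_CompleteNormedModule _ (fun x => scal c (p x * r x * omegat a x))).
rewrite (@RInt_scal R_CompleteNormedModule). reflexivity. apply ex_ip; auto.
intros; rr; unfold scal; simpl; unfold mult; simpl; ring. Qed.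

Lemma ip_sum a m (g : nat -> R -> R) r : -1 < a < 1 -> (forall i, cont (g i)) -> cont r ->
  ip a (fun x => sumR m (fun i => g i x)) r = sumR m (fun i => ip a (g i) r).
Proof. intros Ha Hg Hr. induction m; simpl.
- unfold ip. rewrite (@RInt_ext R_CompleteNormedModule _ (fun _ => 0)). rewrite (@RInt_const R_CompleteNormedModule). unfold scal; simpl; unfold mult; simpl; ring.
  intros; rr; ring.
- rewrite ip_plus; auto. rewrite IHm; auto.
  apply (cont_ext (fun x => sumR m (fun i => g i x))). auto. clear IHm. induction m; simpl. apply cont_const. apply cont_plus; auto.
Qed.
Lemma cont_mpoly c k a : cont (mpoly c k a).
Proof. apply (polylt_cont (S k)), polylt_mpoly. Qed.

Lemma orth a ct : -1 < a < 1 -> is_MOP omegat ct -> forall k q, polylt k q -> ip a q (mpoly ct k a) = 0.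
Proof. intros Ha Hm k q [b Hb].
rewrite (ip_ext a q (fun x => sumR k (fun j => (fun i x => b i * x ^ i) j x))) by auto.
rewrite ip_sum; auto. rewrite (sumR_ext _ _ (fun _ => 0)). apply sumR_zero.
intros j Hj. rewrite ip_scal; auto. 2: apply cont_pow. 2: apply cont_mpoly.
unfold ip. rewrite <- Rint_RInt. rewrite Hm; auto. ring. apply ex_ip; auto. apply cont_pow. apply cont_mpoly.
intros i. apply cont_mult. apply cont_const. apply cont_pow. apply cont_mpoly. Qed.

Lemma K_ip a ct n : -1 < a < 1 -> is_MOP omegat ct -> Kt ct a n n = ip a (mpoly ct n a) (mpoly ct n a).
Proof. intros Ha Hm. unfold Kt. rewrite Rint_RInt. 2: apply ex_ip; auto; [apply cont_pow|apply cont_mpoly].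
rewrite (ip_ext a (mpoly ct n a) (fun x => x ^ n + sumR n (fun j => ct n j a * x ^ j))) by (intros; reflexivity).
rewrite ip_plus; auto. 2: apply cont_pow. 2: apply (polylt_cont n), polylt_coef. 2: apply cont_mpoly.
rewrite (orth a ct Ha Hm n (fun x => sumR n (fun j => ct n j a * x ^ j)) (polylt_coef _ _)). unfold ip. rr. rewrite Rplus_0_r. reflexivity. Qed.

Lemma omegat_pos a x : -1 < a < 1 -> -1 <= x <= 1 -> 0 < omegat a x.
Proof. intros. unfold omegat. apply Rinv_0_lt_compat, pow_lt, pos1; auto. Qed.

Lemma Kpos a ct n : -1 < a < 1 -> 0 < ip a (mpoly ct n a) (mpoly ct n a).
Proof. intros Ha. set (g := fun x => mpoly ct n a x * mpoly ct n a x * omegat a x).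
assert (Hgc : forall x, -1 <= x <= 1 -> continuous g x).
{ intros x Hx. unfold g. apply (continuous_mult (fun x => mpoly ct n a x * mpoly ct n a x) (omegat a)).
  apply cont_continuous, cont_mult; apply cont_mpoly. apply omegat_cont; auto. }
assert (Hg0 : forall x, -1 <= x <= 1 -> 0 <= g x).
{ intros x Hx. unfold g. pose proof (omegat_pos a x Ha Hx). apply Rmult_le_pos. apply Rle_0_sqr. lra. }
assert (Hex : ex_RInt g (-1) 1) by (apply ex_ip; auto; apply cont_mpoly).
destruct (nonvanish n (fun j => ct n j a)) as [x0 [Hx0 Hnz]].
assert (Hgx0 : 0 < g x0).
{ unfold g. apply Rmult_lt_0_compat. change (mpoly ct n a x0) with (x0 ^ n + sumR n (fun j => ct n j a * x0 ^ j)).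
  apply Rlt_0_sqr; auto. apply omegat_pos; auto; lra. }
assert (Hc : continuity_pt g x0) by (apply continuity_pt_filterlim, Hgc; lra).
unfold continuity_pt, continue_in, limit1_in, limit_in in Hc. simpl in Hc. unfold R_dist in Hc.
destruct (Hc (g x0) Hgx0) as [alp [Halp Hd]].
set (d := Rmin (alp/2) (Rmin (x0/2) ((1-x0)/2))).
assert (Hd1 : 0 < d). { unfold d. apply Rmin_pos. lra. apply Rmin_pos; lra. }
assert (Hd2 : d <= alp/2) by apply Rmin_l.
assert (Hd3 : d <= x0/2) by (eapply Rle_trans; [apply Rmin_r|apply Rmin_l]).
assert (Hd4 : d <= (1-x0)/2) by (eapply Rle_trans; [apply Rmin_r|apply Rmin_r]).
assert (Hpos : forall x, x0 - d <= x <= x0 + d -> 0 < g x).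
{ intros x Hx. destruct (Req_dec x x0). subst; auto.
  assert (Rabs (x - x0) < alp) by (apply Rabs_def1; lra).
  specialize (Hd x (conj (conj I (not_eq_sym H)) H0)). apply Rabs_def2 in Hd. lra. }
unfold ip. fold g.
assert (E1 : ex_RInt g (-1) (x0 - d)) by (apply (@ex_RInt_Chasles_1 R_CompleteNormedModule _ _ _ 1); [lra|auto]).
assert (E2 : ex_RInt g (x0 - d) 1) by (apply (@ex_RInt_Chasles_2 R_CompleteNormedModule _ (-1)); [lra|auto]).
assert (E3 : ex_RInt g (x0 - d) (x0 + d)) by (apply (@ex_RInt_Chasles_1 R_CompleteNormedModule _ _ _ 1); [lra|auto]).
assert (E4 : ex_RInt g (x0 + d) 1) by (apply (@ex_RInt_Chasles_2 R_CompleteNormedModule _ (x0 - d)); [lra|auto]).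
rewrite <- (@RInt_Chasles R_CompleteNormedModule g (-1) (x0 - d) 1) by auto.
rewrite <- (@RInt_Chasles R_CompleteNormedModule g (x0 - d) (x0 + d) 1) by auto.
unfold plus; simpl.
assert (0 <= RInt g (-1) (x0 - d)) by (apply RInt_ge_0; auto; [lra|intros; apply Hg0; lra]).
assert (0 <= RInt g (x0 + d) 1) by (apply RInt_ge_0; auto; [lra|intros; apply Hg0; lra]).
assert (0 < RInt g (x0 - d) (x0 + d)).
{ apply RInt_gt_0. lra. intros; apply Hpos; lra. intros; apply Hgc; lra. }
lra. Qed.

Lemma expand a ct : -1 < a < 1 -> is_MOP omegat ct -> forall n s, polylt n s -> forall x,
  sumR n (fun i => ip a s (mpoly ct i a) / ip a (mpoly ct i a) (mpoly ct i a) * mpoly ct i a x) = s x.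
Proof. intros Ha Hm n. induction n; intros s [b Hb] x.
- rewrite Hb. reflexivity.
- set (s2 := fun x => sumR n (fun j => (b j - b n * ct n j a) * x ^ j)).
  assert (Hs2 : polylt n s2) by apply polylt_coef.
  assert (Es : forall x, s x = s2 x + b n * mpoly ct n a x).
  { intros y. rewrite Hb. unfold s2, mpoly. simpl.
    rewrite (sumR_ext n (fun j => (b j - b n * ct n j a) * y ^ j) (fun j => b j * y ^ j + (- b n) * (ct n j a * y ^ j))) by (intros; ring).
    rewrite sumR_plus, sumR_scal. ring. }
  assert (Cs2 : cont s2) by (apply (polylt_cont n); auto).
  assert (Eip : forall i, ip a s (mpoly ct i a) = ip a s2 (mpoly ct i a) + b n * ip a (mpoly ct n a) (mpoly ct i a)).
  { intros i. rewrite (ip_ext a s (fun x => s2 x + b n * mpoly ct n a x)) by auto.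
    assert (Cn : cont (fun x => b n * mpoly ct n a x)) by (apply cont_mult; [apply cont_const|apply cont_mpoly]).
    rewrite (ip_plus a s2 _ _ Ha Cs2 Cn (cont_mpoly _ _ _)).
    rewrite (ip_scal a (b n) _ _ Ha (cont_mpoly _ _ _) (cont_mpoly _ _ _)). reflexivity. }
  simpl. rewrite (sumR_ext _ _ (fun i => ip a s2 (mpoly ct i a) / ip a (mpoly ct i a) (mpoly ct i a) * mpoly ct i a x)).
  rewrite IHn by auto. rewrite Eip. rewrite (orth a ct Ha Hm n s2 Hs2). rewrite Es.
  pose proof (Kpos a ct n Ha). field. lra.
  intros i Hi. rewrite Eip. rewrite (ip_sym a (mpoly ct n a)). rewrite (orth a ct Ha Hm n (mpoly ct i a)).
  f_equal. f_equal. ring. apply (polylt_le (S i)). lia. apply polylt_mpoly. Qed.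
Definition dcf (c : nat -> nat -> R -> R) k j a : R :=
  epsilon (inhabits 0) (fun l => derivable_pt_lim (c k j) a l).

Lemma Dplus f g x l1 l2 : derivable_pt_lim f x l1 -> derivable_pt_lim g x l2 ->
  derivable_pt_lim (fun y => f y + g y) x (l1 + l2).
Proof. intros; exact (derivable_pt_lim_plus f g x l1 l2 H H0). Qed.
Lemma Dmult f g x l1 l2 : derivable_pt_lim f x l1 -> derivable_pt_lim g x l2 ->
  derivable_pt_lim (fun y => f y * g y) x (l1 * g x + f x * l2).
Proof. intros; exact (derivable_pt_lim_mult f g x l1 l2 H H0). Qed.
Lemma Dconst c x : derivable_pt_lim (fun _ => c) x 0.
Proof. exact (derivable_pt_lim_const c x). Qed.
Lemma Dcomp f g x l1 l2 : derivable_pt_lim f x l1 -> derivable_pt_lim g (f x) l2 ->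
  derivable_pt_lim (fun y => g (f y)) x (l2 * l1).
Proof. intros; exact (derivable_pt_lim_comp f g x l1 l2 H H0). Qed.
Lemma Dval f x l l' : derivable_pt_lim f x l -> l = l' -> derivable_pt_lim f x l'.
Proof. intros H E; subst; auto. Qed.
Lemma Dsum n (F : nat -> R -> R) (l : nat -> R) x : (forall i, (i < n)%nat -> derivable_pt_lim (F i) x (l i)) ->
  derivable_pt_lim (fun y => sumR n (fun i => F i y)) x (sumR n l).
Proof. induction n; intros H; simpl. apply Dconst.
apply Dplus. apply IHn; intros; apply H; lia. apply H; lia. Qed.

Lemma Dmpoly c i alpha dalpha z mu :
  (forall k j a, -1 < a < 1 -> exists l, derivable_pt_lim (c k j) a l) ->
  -1 < alpha z < 1 -> derivable_pt_lim alpha z (dalpha z) ->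
  derivable_pt_lim (fun z' => mpoly c i (alpha z') mu) z
    (sumR i (fun j => dcf c i j (alpha z) * dalpha z * mu ^ j)).
Proof. intros Hc Ha Hal. unfold mpoly. eapply Dval. apply Dplus. apply Dconst.
apply (Dsum i (fun j y => c i j (alpha y) * mu ^ j) (fun j => dcf c i j (alpha z) * dalpha z * mu ^ j)).
intros j Hj. eapply Dval. apply Dmult. apply (Dcomp alpha (c i j)). apply Hal.
unfold dcf. apply (epsilon_spec (inhabits 0) (fun l => derivable_pt_lim (c i j) (alpha z) l)). apply Hc; auto.
apply Dconst. unfold dcf; cbv beta; ring. ring. Qed.

Lemma Domega_t a mu : -1 < a < 1 -> -1 <= mu <= 1 ->
  derivable_pt_lim (fun t => omega t mu) a (-4 * mu * omegat a mu).
Proof. intros Ha Hmu. pose proof (pos1 a mu Ha Hmu). apply is_derive_Reals. unfold omega, omegat.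
auto_derive. intro E. assert (0 < (1 + a * mu) ^ 4) by (apply pow_lt; lra). simpl in H0. lra.
field. lra. Qed.

Lemma Domega alpha dalpha z mu : -1 < alpha z < 1 -> -1 <= mu <= 1 -> derivable_pt_lim alpha z (dalpha z) ->
  derivable_pt_lim (fun z' => omega (alpha z') mu) z (-4 * mu * dalpha z * omegat (alpha z) mu).
Proof. intros Ha Hmu Hal. eapply Dval. apply (Dcomp alpha (fun t => omega t mu)). apply Hal.
apply Domega_t; auto. ring. Qed.

Definition dIform c N (f df : nat -> R -> R) (alpha dalpha : R -> R) z mu :=
  sumR (S N) (fun i => df i z * (omega (alpha z) mu * mpoly c i (alpha z) mu) +
     f i z * ((-4 * mu * dalpha z * omegat (alpha z) mu) * mpoly c i (alpha z) mu +
              omega (alpha z) mu * sumR i (fun j => dcf c i j (alpha z) * dalpha z * mu ^ j))).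

Lemma DIhat c N f df alpha dalpha :
  (forall k j a, -1 < a < 1 -> exists l, derivable_pt_lim (c k j) a l) ->
  (forall z, -1 < alpha z < 1) ->
  (forall z, derivable_pt_lim alpha z (dalpha z)) ->
  (forall i z, (i <= N)%nat -> derivable_pt_lim (f i) z (df i z)) ->
  is_dz_Ihat c N f alpha (dIform c N f df alpha dalpha).
Proof. intros Hc Ha Hal Hf z mu Hmu. unfold Ihat, dIform.
apply (Dsum (S N) (fun i y => f i y * Phi c (alpha y) i mu)). intros i Hi.
eapply Dval. apply Dmult. apply Hf; lia. unfold Phi. apply Dmult. apply Domega; auto. apply Dmpoly; auto.
unfold Phi. ring. Qed.
Lemma sumR_S n g : sumR (S n) g = sumR n g + g n.
Proof. reflexivity. Qed.

Definition Bf c N (f df : nat -> R -> R) z a da mu :=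
  sumR (S N) (fun i => df i z * ((1 + a * mu) * mpoly c i a mu) +
     f i z * (-4 * mu * da * mpoly c i a mu + (1 + a * mu) * sumR i (fun j => dcf c i j a * da * mu ^ j))).

Lemma dI_B c N f df alpha dalpha z mu : -1 < alpha z < 1 -> -1 <= mu <= 1 ->
  dIform c N f df alpha dalpha z mu = omegat (alpha z) mu * Bf c N f df z (alpha z) (dalpha z) mu.
Proof. intros Ha Hmu. pose proof (pos1 _ _ Ha Hmu). unfold dIform, Bf. rewrite <- sumR_scal.
apply sumR_ext; intros. unfold omega, omegat. field. lra. Qed.

Lemma polylt_lin a n p : polylt n p -> polylt (S n) (fun mu => (1 + a * mu) * p mu).
Proof. intros H. apply (polylt_ext _ (fun mu => p mu + a * (mu * p mu))). intros; ring.
apply polylt_plus. apply polylt_S; auto. apply polylt_scal, polylt_mulx; auto. Qed.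

Lemma B_poly c N f df z a da : polylt (S N)
  (fun mu => Bf c N f df z a da mu - (a * df N z - 4 * f N z * da) * mu ^ (S N)).
Proof.
set (D := fun i mu => sumR i (fun j => dcf c i j a * da * mu ^ j)).
set (P := fun mu => sumR N (fun j => c N j a * mu ^ j)).
apply (polylt_ext _ (fun mu => sumR N (fun i =>
   df i z * ((1 + a * mu) * mpoly c i a mu) + f i z * (-4 * da * (mu * mpoly c i a mu) + (1 + a * mu) * D i mu))
   + (df N z * (mpoly c N a mu + a * (mu * P mu)) + f N z * (-4 * da * (mu * P mu) + (1 + a * mu) * D N mu)))).
{ intros mu. unfold Bf, D, P. simpl sumR at 2. unfold mpoly. simpl pow.
  rewrite sumR_S. rewrite (sumR_ext N (fun i => df i z * ((1 + a * mu) * (mu ^ i + sumR i (fun j => c i j a * mu ^ j))) +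
    f i z * (-4 * da * (mu * (mu ^ i + sumR i (fun j => c i j a * mu ^ j))) +
     (1 + a * mu) * sumR i (fun j => dcf c i j a * da * mu ^ j)))
    (fun i => df i z * ((1 + a * mu) * (mu ^ i + sumR i (fun j => c i j a * mu ^ j))) +
    f i z * (-4 * mu * da * (mu ^ i + sumR i (fun j => c i j a * mu ^ j)) +
     (1 + a * mu) * sumR i (fun j => dcf c i j a * da * mu ^ j)))) by (intros; ring).
  ring. }
apply polylt_plus.
- apply polylt_sum. intros i Hi. apply (polylt_le (S (S i))). lia.
  apply polylt_plus. apply polylt_scal. apply polylt_lin, polylt_mpoly.
  apply polylt_scal. apply polylt_plus. apply polylt_scal, polylt_mulx, polylt_mpoly.
  apply polylt_S, polylt_lin. apply polylt_coef.
- assert (HP : polylt N P) by apply polylt_coef.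
  apply polylt_plus. apply polylt_scal. apply polylt_plus. apply polylt_mpoly. apply polylt_scal, polylt_mulx; auto.
  apply polylt_scal. apply polylt_plus. apply polylt_scal, polylt_mulx; auto.
  apply polylt_lin. apply polylt_coef.
Qed.
Lemma int_claim a ct N coef (g : R -> R) j : -1 < a < 1 ->
  (forall mu, -1 <= mu <= 1 -> g mu = coef * Phit ct a (S N) mu) ->
  Rint (fun mu => mu ^ j * g mu) (-1) 1 = coef * Kt ct a j (S N).
Proof. intros Ha Hg.
assert (Hex : ex_RInt (fun x => (coef * (x ^ j * mpoly ct (S N) a x)) * omegat a x) (-1) 1).
{ apply ex_w; auto. apply cont_mult. apply cont_const. apply cont_mult. apply cont_pow. apply cont_mpoly. }
assert (Eq : forall x, Rmin (-1) 1 < x < Rmax (-1) 1 -> (coef * (x ^ j * mpoly ct (S N) a x)) * omegat a x = x ^ j * g x).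
{ intros x Hx. rewrite Rmin_left, Rmax_right in Hx by lra. rewrite Hg by lra. unfold Phit. ring. }
rewrite Rint_RInt. 2: apply (@ex_RInt_ext R_CompleteNormedModule _ _ _ _ Eq Hex).
rewrite <- (@RInt_ext R_CompleteNormedModule _ _ _ _ Eq).
unfold Kt. rewrite Rint_RInt. 2: apply ex_ip; auto; [apply cont_pow|apply cont_mpoly].
rewrite (@RInt_ext R_CompleteNormedModule _ (fun x => scal coef (x ^ j * mpoly ct (S N) a x * omegat a x))).
rewrite (@RInt_scal R_CompleteNormedModule). reflexivity. apply ex_ip; auto; [apply cont_pow|apply cont_mpoly].
intros; rr; unfold scal; simpl; unfold mult; simpl; ring. Qed.

Theorem mainTheorem8 :
  forall (N : nat) (c ct : nat -> nat -> R -> R) (f df : nat -> R -> R)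
         (alpha dalpha : R -> R),
    (1 <= N)%nat ->
    is_MOP omega c ->
    is_MOP omegat ct ->
    (forall k j a, -1 < a < 1 -> exists l, derivable_pt_lim (c k j) a l) ->
    (forall z, -1 < alpha z < 1) ->
    (forall z, derivable_pt_lim alpha z (dalpha z)) ->
    (forall z, f 1%nat z = 0) ->
    (forall i z, (i <= N)%nat -> derivable_pt_lim (f i) z (df i z)) ->
    (exists dI, is_dz_Ihat c N f alpha dI) /\
    (forall dI, is_dz_Ihat c N f alpha dI ->
      forall z,
      let a := alpha z in
      let coef := a * df N z - 4 * f N z * dalpha z in
      let Res := fun mu => dI z mu - Ptilde ct N a (dI z) mu in
      (forall mu, -1 <= mu <= 1 -> Res mu = coef * Phit ct a (S N) mu) /\
      (forall k : nat, (k <= N)%nat ->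
         Rint (fun mu => mu ^ (S k) * Res mu) (-1) 1 =
         (if Nat.ltb k N then 0 else Kt ct a (S N) (S N) * coef)) /\
      (N = 1%nat ->
         (forall mu, -1 <= mu <= 1 -> Res mu = 0) /\
         (forall k : nat, (k <= N)%nat ->
            Rint (fun mu => mu ^ (S k) * Res mu) (-1) 1 = 0))).
Proof.
intros N c ct f df alpha dalpha HN Hc0 Hm Hc Hal Hdal Hf1 Hdf.
assert (HD := DIhat c N f df alpha dalpha Hc Hal Hdal Hdf).
split. { exists (dIform c N f df alpha dalpha); auto. }
intros dI HdI z a coef Res.
assert (Ha : -1 < a < 1) by apply Hal.
set (B := Bf c N f df z a (dalpha z)).
assert (Edi : forall mu, -1 <= mu <= 1 -> dI z mu = omegat a mu * B mu).
{ intros mu Hmu. change (dI z mu = omegat (alpha z) mu * Bf c N f df z (alpha z) (dalpha z) mu). rewrite <- (dI_B c N f df alpha dalpha z mu (Hal z) Hmu).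
  apply (uniqueness_limite (fun z' => Ihat c N f alpha z' mu) z); auto. }
set (s := fun mu => B mu - coef * mpoly ct (S N) a mu).
assert (Hs : polylt (S N) s).
{ apply (polylt_ext _ (fun mu => (B mu - coef * mu ^ (S N)) - coef * sumR (S N) (fun j => ct (S N) j a * mu ^ j))).
  intros mu; unfold s, mpoly; ring.
  apply polylt_minus. apply B_poly. apply polylt_scal, polylt_coef. }
assert (Cs : cont s) by (apply (polylt_cont (S N)); auto).
assert (EB : forall mu, B mu = s mu + coef * mpoly ct (S N) a mu) by (intros; unfold s; ring).
assert (CB : cont B).
{ apply (cont_ext (fun mu => s mu + coef * mpoly ct (S N) a mu)). intros; auto.
  apply cont_plus; auto. apply cont_mult. apply cont_const. apply cont_mpoly. }
assert (Hint : forall i, (i < S N)%nat ->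
  Rint (fun nu => dI z nu * mpoly ct i a nu) (-1) 1 = ip a s (mpoly ct i a)).
{ intros i Hi.
  assert (Eq : forall x, Rmin (-1) 1 < x < Rmax (-1) 1 -> B x * mpoly ct i a x * omegat a x = dI z x * mpoly ct i a x).
  { intros x Hx. rewrite Rmin_left, Rmax_right in Hx by lra. rewrite Edi by lra. ring. }
  rewrite Rint_RInt. 2: apply (@ex_RInt_ext R_CompleteNormedModule _ _ _ _ Eq); apply ex_ip; auto; apply cont_mpoly.
  rewrite <- (@RInt_ext R_CompleteNormedModule _ _ _ _ Eq). fold (ip a B (mpoly ct i a)).
  rewrite (ip_ext a B (fun x => s x + coef * mpoly ct (S N) a x)) by auto.
  rewrite ip_plus; auto. 2: apply cont_mult; [apply cont_const|apply cont_mpoly]. 2: apply cont_mpoly.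
  rewrite ip_scal; auto. 2,3: apply cont_mpoly.
  rewrite (ip_sym a (mpoly ct (S N) a)). rewrite (orth a ct Ha Hm (S N)). ring.
  apply (polylt_le (S i)). lia. apply polylt_mpoly. }
assert (Claim1 : forall mu, -1 <= mu <= 1 -> Res mu = coef * Phit ct a (S N) mu).
{ intros mu Hmu. unfold Res, Ptilde.
  rewrite (sumR_ext (S N) _ (fun i => omegat a mu * (ip a s (mpoly ct i a) / ip a (mpoly ct i a) (mpoly ct i a) * mpoly ct i a mu))).
  rewrite sumR_scal. rewrite (expand a ct Ha Hm (S N) s Hs mu). rewrite Edi by auto. rewrite EB.
  unfold Phit. ring.
  intros i Hi. rewrite Hint by auto. rewrite K_ip by auto. unfold Phit. ring. }
assert (Claim2 : forall k : nat, (k <= N)%nat ->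
         Rint (fun mu => mu ^ (S k) * Res mu) (-1) 1 =
         (if Nat.ltb k N then 0 else Kt ct a (S N) (S N) * coef)).
{ intros k Hk. rewrite (int_claim a ct N coef Res (S k) Ha Claim1).
  destruct (Nat.ltb_spec k N).
  - unfold Kt. rewrite Hm by (auto; lia). ring.
  - replace k with N by lia. ring. }
split; [exact Claim1|split; [exact Claim2|]].
intros HN1.
assert (Hc1 : coef = 0).
{ unfold coef. subst N. rewrite Hf1.
  assert (E : f 1%nat = fun _ => 0) by (apply functional_extensionality; auto).
  pose proof (Hdf 1%nat z (le_n _)) as H1. rewrite E in H1.
  rewrite (uniqueness_limite _ _ _ _ H1 (Dconst 0 z)). ring. }
split.
- intros mu Hmu. rewrite Claim1 by auto. rewrite Hc1. ring.
- intros k Hk. rewrite Claim2 by auto. rewrite Hc1. destruct (Nat.ltb k N); ring.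
Qed.
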